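(* Let $F:\mathbf{PolyEnd}\to\mathbf{PolyEnd}$, $\mathsf P\mapsto\overline{\mathsf P}$, be the free-monad monad. For every polynomial endofunctor $\mathsf P$, the functor $\mathbf{PolyEnd}/\mathsf P\to\mathbf{PolyEnd}/\overline{\mathsf P}$, $[\mathsf Q\to\mathsf P]\mapsto[\overline{\mathsf Q}\to\overline{\mathsf P}]$, has a left adjoint.
   Context: A polynomial endofunctor is a diagram of sets $P_0\xleftarrow{s}P_2\xrightarrow{p}P_1\xrightarrow{t}P_0$ with $p$ having finite fibres; a morphism is a triple of maps commuting with $s,p,t$ whose middle square is a pullback; these form $\mathbf{PolyEnd}$. A tree is a polynomial endofunctor with all sets finite, $t$ injective, $s$ injective with singleton complement (the root), and such that iterating $\sigma$ ($\sigma(\mathrm{root})=\mathrm{root}$, $\sigma(e)=t(p(e))$ for $e\in T_2$) brings every edge to the root. A $\mathsf P$-tree is a tree with a morphism to $\mathsf P$. The free monad on $\mathsf P$ is $\overline{\mathsf P}:\ P_0\leftarrow\mathrm{tr}'(\mathsf P)\to\mathrm{tr}(\mathsf P)\to P_0$, where $\mathrm{tr}(\mathsf P)$ is the set of isomorphism classes of $\mathsf P$-trees, $\mathrm{tr}'(\mathsf P)$ those with a marked leaf, the maps returning the decoration of the marked leaf, forgetting the mark, and returning the decoration of the root; for a morphism $\alpha:\mathsf Q\to\mathsf P$, $\overline\alpha$ composes decorations with $\alpha$. *)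

(* Defs.v *)
From mathcomp Require Import all_boot.
From Stdlib Require Import ClassicalEpsilon.

Set Implicit Arguments.
Unset Strict Implicit.
Unset Printing Implicit Defensive.

Record PolyEnd := PE {
  pe0 : Type; pe2 : Type; pe1 : Type;
  pes : pe2 -> pe0; pep : pe2 -> pe1; pet : pe1 -> pe0 }.

Definition finfib (P : PolyEnd) : Prop :=
  forall b : pe1 P, exists l : list (pe2 P), forall e, pep e = b -> List.In e l.

Record PMap (Q P : PolyEnd) := PM {
  f0 : pe0 Q -> pe0 P; f2 : pe2 Q -> pe2 P; f1 : pe1 Q -> pe1 P }.

(* commuting with s,p,t and middle square a pullback (of sets) *)
Definition is_mor (Q P : PolyEnd) (a : PMap Q P) : Prop :=
  (forall e, f0 a (pes e) = pes (f2 a e)) /\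
  (forall e, f1 a (pep e) = pep (f2 a e)) /\
  (forall b, f0 a (pet b) = pet (f1 a b)) /\
  (forall (b : pe1 Q) (e' : pe2 P), pep e' = f1 a b ->
     exists! e : pe2 Q, pep e = b /\ f2 a e = e').

Definition Mor (Q P : PolyEnd) := { a : PMap Q P | is_mor a }.

Definition pmap_comp (A B C : PolyEnd) (f : PMap A B) (g : PMap B C) : PMap A C :=
  PM (fun x => f0 g (f0 f x)) (fun x => f2 g (f2 f x)) (fun x => f1 g (f1 f x)).

Definition pmap_eq (A B : PolyEnd) (f g : PMap A B) : Prop :=
  (forall x, f0 f x = f0 g x) /\ (forall x, f2 f x = f2 g x) /\
  (forall x, f1 f x = f1 g x).

Lemma is_mor_comp (A B C : PolyEnd) (f : PMap A B) (g : PMap B C) :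
  is_mor f -> is_mor g -> is_mor (pmap_comp f g).
Proof.
move=> [fs [fp [ft fpb]]] [gs [gp [gt gpb]]]; split; [|split; [|split]] => /=.
- by move=> e; rewrite fs gs.
- by move=> e; rewrite fp gp.
- by move=> b; rewrite ft gt.
move=> b e' He'.
have [e1 [[He1 He1'] Hu1]] := gpb (f1 f b) e' He'.
have [e [[He He'2] Hu]] := fpb b e1 He1.
exists e; split; first by split => //; rewrite He'2.
move=> e'' [H1 H2]; apply: Hu; split => //.
symmetry; apply: Hu1; split => //; by rewrite -fp H1.
Qed.

Definition mor_comp (A B C : PolyEnd) (f : Mor A B) (g : Mor B C) : Mor A C :=
  exist _ (pmap_comp (proj1_sig f) (proj1_sig g))
          (is_mor_comp (proj2_sig f) (proj2_sig g)).

Definition tsigma (n0 n2 n1 : nat) (s : 'I_n2 -> 'I_n0) (p : 'I_n2 -> 'I_n1)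
  (t : 'I_n1 -> 'I_n0) (x : 'I_n0) : 'I_n0 :=
  match [pick e | s e == x] with Some e => t (p e) | None => x end.

Record Tree := MkTree {
  tn0 : nat; tn2 : nat; tn1 : nat;
  ts : 'I_tn2 -> 'I_tn0; tp : 'I_tn2 -> 'I_tn1; tt : 'I_tn1 -> 'I_tn0;
  troot : 'I_tn0;
  tt_inj : injective tt;
  ts_inj : injective ts;
  ts_root : forall e, ts e <> troot;
  ts_onto : forall x, x <> troot -> exists e, ts e = x;
  ttree : forall x, exists k, iter k (tsigma ts tp tt) x = troot }.

Definition tree_pe (T : Tree) : PolyEnd :=
  PE (@ts T) (@tp T) (@tt T).

Definition PTree (P : PolyEnd) := { T : Tree & Mor (tree_pe T) P }.

Definition ptree_iso_via (P : PolyEnd) (A B : PTree P)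
  (h : Mor (tree_pe (projT1 A)) (tree_pe (projT1 B))) : Prop :=
  bijective (f0 (proj1_sig h)) /\ bijective (f2 (proj1_sig h)) /\
  bijective (f1 (proj1_sig h)) /\
  pmap_eq (pmap_comp (proj1_sig h) (proj1_sig (projT2 B))) (proj1_sig (projT2 A)).

Definition ptree_iso (P : PolyEnd) (A B : PTree P) : Prop :=
  exists h, @ptree_iso_via P A B h.

(* P-trees with a marked leaf (an edge which is not the output of a node) *)
Definition MPTree (P : PolyEnd) :=
  { A : PTree P & { l : 'I_(tn0 (projT1 A)) | forall b, tt b <> l } }.

Definition mptree_iso (P : PolyEnd) (M N : MPTree P) : Prop :=
  exists h, @ptree_iso_via P (projT1 M) (projT1 N) h /\
    f0 (proj1_sig h) (proj1_sig (projT2 M)) = proj1_sig (projT2 N).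

Definition trP (P : PolyEnd) :=
  { C : PTree P -> Prop | exists A, C = ptree_iso A }.
Definition trmP (P : PolyEnd) :=
  { C : MPTree P -> Prop | exists M, C = mptree_iso M }.

Definition class_of (P : PolyEnd) (A : PTree P) : trP P :=
  exist _ (ptree_iso A) (ex_intro _ A erefl).
Definition mclass_of (P : PolyEnd) (M : MPTree P) : trmP P :=
  exist _ (mptree_iso M) (ex_intro _ M erefl).

Definition rep (P : PolyEnd) (C : trP P) : PTree P :=
  proj1_sig (constructive_indefinite_description _ (proj2_sig C)).
Definition mrep (P : PolyEnd) (C : trmP P) : MPTree P :=
  proj1_sig (constructive_indefinite_description _ (proj2_sig C)).

Definition root_dec (P : PolyEnd) (A : PTree P) : pe0 P :=
  f0 (proj1_sig (projT2 A)) (troot (projT1 A)).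
Definition leaf_dec (P : PolyEnd) (M : MPTree P) : pe0 P :=
  f0 (proj1_sig (projT2 (projT1 M))) (proj1_sig (projT2 M)).
Definition forget (P : PolyEnd) (M : MPTree P) : PTree P := projT1 M.

Definition Fbar (P : PolyEnd) : PolyEnd :=
  PE (fun C : trmP P => leaf_dec (mrep C))
     (fun C : trmP P => class_of (forget (mrep C)))
     (fun C : trP P => root_dec (rep C)).

Definition ptree_comp (Q P : PolyEnd) (A : PTree Q) (a : Mor Q P) : PTree P :=
  existT _ (projT1 A) (mor_comp (projT2 A) a).
Definition mptree_comp (Q P : PolyEnd) (M : MPTree Q) (a : Mor Q P) : MPTree P :=
  existT _ (ptree_comp (projT1 M) a) (projT2 M).

Definition Fbar_map (Q P : PolyEnd) (a : Mor Q P) : PMap (Fbar Q) (Fbar P) :=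
  @PM (Fbar Q) (Fbar P) (f0 (proj1_sig a))
     (fun C : trmP Q => mclass_of (mptree_comp (mrep C) a))
     (fun C : trP Q => class_of (ptree_comp (rep C) a)).

(* Main.v *)
Require Import Defs.
From mathcomp Require Import all_boot.
From Stdlib Require Import ClassicalEpsilon ProofIrrelevance FunctionalExtensionality PropExtensionality.
From Stdlib Require Import Relation_Operators Eqdep.

Set Implicit Arguments.
Unset Strict Implicit.
Unset Printing Implicit Defensive.

Lemma sig_ext (A : Type) (Pr : A -> Prop) (a b : sig Pr) :
  proj1_sig a = proj1_sig b -> a = b.
Proof.
case: a => a pa; case: b => b pb /= E; subst b.
by rewrite (proof_irrelevance _ pa pb).
Qed.

Lemma bij_inv (A B : Type) (f : A -> B) :
  bijective f -> {g | cancel f g /\ cancel g f}.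
Proof.
move=> H; apply: constructive_indefinite_description.
by case: H => g K1 K2; exists g.
Qed.

Definition idPM (A : PolyEnd) : PMap A A := @PM A A id id id.
Lemma is_mor_id (A : PolyEnd) : is_mor (idPM A).
Proof.
split; [by []|split; [by []|split; [by []|]]].
move=> b e' H; exists e'; split; first by split.
by move=> e [_ <-].
Qed.
Definition idMor (A : PolyEnd) : Mor A A := exist _ _ (is_mor_id A).

Lemma inv_mor (A B : PolyEnd) (h : Mor A B) :
  bijective (f0 (proj1_sig h)) -> bijective (f2 (proj1_sig h)) ->
  bijective (f1 (proj1_sig h)) ->
  { h' : Mor B A |
    (cancel (f0 (proj1_sig h)) (f0 (proj1_sig h')) /\ cancel (f0 (proj1_sig h')) (f0 (proj1_sig h))) /\
    (cancel (f2 (proj1_sig h)) (f2 (proj1_sig h')) /\ cancel (f2 (proj1_sig h')) (f2 (proj1_sig h))) /\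
    (cancel (f1 (proj1_sig h)) (f1 (proj1_sig h')) /\ cancel (f1 (proj1_sig h')) (f1 (proj1_sig h))) }.
Proof.
case: h => [[h0 h2 h1] [hs [hp [ht hpb]]]] /= B0 B2 B1.
case: (bij_inv B0) => g0 [K0 K0'].
case: (bij_inv B2) => g2 [K2 K2'].
case: (bij_inv B1) => g1 [K1 K1'].
have M : is_mor (@PM B A g0 g2 g1).
  split; [|split; [|split]] => /=.
  - by move=> e; have := hs (g2 e); rewrite /= K2' => <-; rewrite K0.
  - by move=> e; have := hp (g2 e); rewrite /= K2' => <-; rewrite K1.
  - by move=> b; have := ht (g1 b); rewrite /= K1' => <-; rewrite K0.
  move=> b e' He'; exists (h2 e'); split.
    by split; [rewrite -hp /= He' K1'|rewrite K2].
  by move=> e [_ <-]; rewrite K2'.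
by exists (exist _ _ M).
Qed.

Section Gen.
Variable Q : PolyEnd.

Definition dec (A : PTree Q) := proj1_sig (projT2 A).

Lemma iso_refl_via (A : PTree Q) : @ptree_iso_via _ A A (idMor _).
Proof.
split; [|split; [|split]]; try by exists id.
by split; [|split].
Qed.

Lemma iso_refl (A : PTree Q) : ptree_iso A A.
Proof. exists (idMor _); exact: iso_refl_via. Qed.

Lemma iso_sym_via (A B : PTree Q) h : @ptree_iso_via _ A B h ->
  exists h', @ptree_iso_via _ B A h' /\
    cancel (f0 (proj1_sig h)) (f0 (proj1_sig h')) /\ cancel (f0 (proj1_sig h')) (f0 (proj1_sig h)).
Proof.
move=> [B0 [B2 [B1 [C0 [C2 C1]]]]].
case: (inv_mor B0 B2 B1) => h' [[K0 K0'] [[K2 K2'] [K1 K1']]].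
exists h'; split; last by split.
split; [exact: (Bijective K0' K0)|split; [exact: (Bijective K2' K2)|split; [exact: (Bijective K1' K1)|]]].
split; [|split] => y /=.
- by rewrite -C0 /= K0'.
- by rewrite -C2 /= K2'.
- by rewrite -C1 /= K1'.
Qed.

Lemma iso_sym (A B : PTree Q) : ptree_iso A B -> ptree_iso B A.
Proof. by case=> h /iso_sym_via [h' [H _]]; exists h'. Qed.

Lemma iso_trans_via (A B C : PTree Q) h h' : @ptree_iso_via _ A B h -> @ptree_iso_via _ B C h' ->
  @ptree_iso_via _ A C (mor_comp h h').
Proof.
move=> [B0 [B2 [B1 [C0 [C2 C1]]]]] [B0' [B2' [B1' [C0' [C2' C1']]]]].
split; [exact: bij_comp|split; [exact: bij_comp|split; [exact: bij_comp|]]].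
split; [|split] => y /=.
- by have := C0' (f0 (proj1_sig h) y) => /= ->; apply: C0.
- by have := C2' (f2 (proj1_sig h) y) => /= ->; apply: C2.
- by have := C1' (f1 (proj1_sig h) y) => /= ->; apply: C1.
Qed.

Lemma iso_trans (A B C : PTree Q) : ptree_iso A B -> ptree_iso B C -> ptree_iso A C.
Proof. by case=> h H; case=> h' H'; exists (mor_comp h h'); exact: iso_trans_via. Qed.

Lemma class_eq (A B : PTree Q) : ptree_iso A B -> class_of A = class_of B.
Proof.
move=> H; apply: sig_ext => /=; apply: functional_extensionality => C.
apply: propositional_extensionality; split => H'.
- exact: iso_trans (iso_sym H) H'.
- exact: iso_trans H H'.
Qed.

Lemma class_iso (A B : PTree Q) : class_of A = class_of B -> ptree_iso A B.
Proof. move/(f_equal (@proj1_sig _ _)) => /= ->; exact: iso_refl. Qed.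

Lemma rep_spec (C : trP Q) : proj1_sig C = ptree_iso (rep C).
Proof. rewrite /rep; by case: (constructive_indefinite_description _ _). Qed.

Lemma class_rep (C : trP Q) : class_of (rep C) = C.
Proof. by apply: sig_ext; rewrite /= rep_spec. Qed.

Lemma rep_iso (C : trP Q) (A : PTree Q) : C = class_of A -> ptree_iso (rep C) A.
Proof. by move=> E; apply: class_iso; rewrite class_rep. Qed.

Definition lf (M : MPTree Q) := proj1_sig (projT2 M).

Lemma miso_refl (M : MPTree Q) : mptree_iso M M.
Proof. by exists (idMor _); split; [exact: iso_refl_via|]. Qed.

Lemma miso_sym (M N : MPTree Q) : mptree_iso M N -> mptree_iso N M.
Proof.
case=> h [/iso_sym_via [h' [H [K K']]] E]; exists h'; split => //.
by rewrite -E K.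
Qed.

Lemma miso_trans (M N O : MPTree Q) : mptree_iso M N -> mptree_iso N O -> mptree_iso M O.
Proof.
case=> h [H E]; case=> h' [H' E']; exists (mor_comp h h'); split.
  exact: iso_trans_via H H'.
by rewrite /= E E'.
Qed.

Lemma mclass_eq (M N : MPTree Q) : mptree_iso M N -> mclass_of M = mclass_of N.
Proof.
move=> H; apply: sig_ext => /=; apply: functional_extensionality => C.
apply: propositional_extensionality; split => H'.
- exact: miso_trans (miso_sym H) H'.
- exact: miso_trans H H'.
Qed.

Lemma mclass_iso (M N : MPTree Q) : mclass_of M = mclass_of N -> mptree_iso M N.
Proof. move/(f_equal (@proj1_sig _ _)) => /= ->; exact: miso_refl. Qed.

Lemma mrep_spec (C : trmP Q) : proj1_sig C = mptree_iso (mrep C).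
Proof. rewrite /mrep; by case: (constructive_indefinite_description _ _). Qed.

Lemma mclass_rep (C : trmP Q) : mclass_of (mrep C) = C.
Proof. by apply: sig_ext; rewrite /= mrep_spec. Qed.

Lemma mrep_iso (C : trmP Q) (M : MPTree Q) : C = mclass_of M -> mptree_iso (mrep C) M.
Proof. by move=> E; apply: mclass_iso; rewrite mclass_rep. Qed.

Lemma miso_iso (M N : MPTree Q) : mptree_iso M N -> ptree_iso (forget M) (forget N).
Proof. by case=> h [H _]; exists h. Qed.


Lemma root_pres (A B : PTree Q) h : @ptree_iso_via _ A B h ->
  f0 (proj1_sig h) (troot (projT1 A)) = troot (projT1 B).
Proof.
move=> [B0 [B2 _]].
have [hs _] := proj2_sig h.
case: (eqVneq (f0 (proj1_sig h) (troot (projT1 A))) (troot (projT1 B))) => // /eqP Ne.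
have [e' He'] := ts_onto Ne.
case: B2 => g2 K2 K2'.
have := hs (g2 e'); rewrite /= K2' He' => /(bij_inj B0) E.
by case: (ts_root E).
Qed.

Lemma leaf_pres (A B : PTree Q) h l : @ptree_iso_via _ A B h ->
  (forall b, tt b <> l) -> forall b, tt b <> f0 (proj1_sig h) l.
Proof.
move=> [B0 [B2 [B1 _]]] Hl b E.
have [_ [_ [ht _]]] := proj2_sig h.
case: B1 => g1 K1 K1'.
have := ht (g1 b); rewrite /= K1' E => /(bij_inj B0) E'.
exact: (Hl _ E').
Qed.

Lemma root_dec_iso (A B : PTree Q) : ptree_iso A B -> root_dec A = root_dec B.
Proof.
case=> h H; rewrite /root_dec -(root_pres H).
by case: H => [_ [_ [_ [C0 _]]]]; rewrite -C0.
Qed.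

Lemma leaf_dec_iso (M N : MPTree Q) : mptree_iso M N -> leaf_dec M = leaf_dec N.
Proof.
case=> h [H E]; rewrite /leaf_dec -E.
by case: H => [_ [_ [_ [C0 _]]]]; rewrite -C0.
Qed.

Lemma comp_via (Q' : PolyEnd) (a : Mor Q Q') (A B : PTree Q) h : @ptree_iso_via _ A B h ->
  @ptree_iso_via _ (ptree_comp A a) (ptree_comp B a) h.
Proof.
move=> [B0 [B2 [B1 [C0 [C2 C1]]]]].
split => //; split => //; split => //.
by split; [|split] => y /=; [rewrite -C0|rewrite -C2|rewrite -C1].
Qed.

Lemma iso_unique (A B : PTree Q) h h' : @ptree_iso_via _ A B h -> @ptree_iso_via _ A B h' ->
  pmap_eq (proj1_sig h) (proj1_sig h').
Proof.
move=> Hh Hh'.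
have R := root_pres Hh; have R' := root_pres Hh'.
move: Hh Hh' => [_ [_ [_ [C0 [C2 C1]]]]] [_ [_ [_ [C0' [C2' C1']]]]].
have [hs [hp [ht _]]] := proj2_sig h.
have [hs' [hp' [ht' _]]] := proj2_sig h'.
have [dAs [dAp [dAt dApb]]] := proj2_sig (projT2 A).
have [dBs [dBp [dBt dBpb]]] := proj2_sig (projT2 B).
simpl in *.
have node : forall b, f0 (proj1_sig h) (tt b) = f0 (proj1_sig h') (tt b) ->
    f1 (proj1_sig h) b = f1 (proj1_sig h') b.
  by move=> b; rewrite ht ht' => /tt_inj.
have inc : forall e, f1 (proj1_sig h) (tp e) = f1 (proj1_sig h') (tp e) ->
    f2 (proj1_sig h) e = f2 (proj1_sig h') e.
  move=> e E.
  have H : pep (f2 (proj1_sig (projT2 A)) e) = f1 (proj1_sig (projT2 B)) (f1 (proj1_sig h) (tp e)).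
    by rewrite -dAp; have := C1 (tp e) => /= ->.
  case: (dBpb _ _ H) => e0 [_ U].
  rewrite -(U (f2 (proj1_sig h) e)); last by split; [rewrite -hp|have := C2 e].
  apply: U; split; first by rewrite -hp' -E.
  by have := C2' e.
have edge : forall k a, iter k (tsigma (@ts (projT1 A)) (@tp _) (@tt _)) a = troot (projT1 A) ->
    f0 (proj1_sig h) a = f0 (proj1_sig h') a.
  elim=> [|k IH] a; first by move=> /= ->; rewrite R R'.
  rewrite iterSr => /IH; rewrite /tsigma.
  case: pickP => [e /eqP Ee|_] // H.
  by rewrite -Ee hs hs' (inc _ (node _ H)).
have edges : forall a, f0 (proj1_sig h) a = f0 (proj1_sig h') a.
  by move=> a; have [k Hk] := ttree a; exact: edge Hk.
split => //; split => [e|b]; last exact: node.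
exact: inc (node _ (edges _)).
Qed.

End Gen.

Section Quot.
Variables (R : Type) (Rel : R -> R -> Prop).
Definition Eqv := clos_refl_sym_trans R Rel.
Definition QT := {C : R -> Prop | exists r, C = Eqv r}.
Definition cls (r : R) : QT := exist _ (Eqv r) (ex_intro _ r erefl).

Lemma cls_eq r r' : Eqv r r' -> cls r = cls r'.
Proof.
move=> H; apply: sig_ext => /=; apply: functional_extensionality => z.
apply: propositional_extensionality; split => H'.
- exact: rst_trans (rst_sym _ _ _ _ H) H'.
- exact: rst_trans H H'.
Qed.

Lemma cls_surj (C : QT) : exists r, C = cls r.
Proof. case: C => C [r E]; exists r; apply: sig_ext => /=; exact: E. Qed.

Definition qrep (C : QT) : R := proj1_sig (constructive_indefinite_description _ (proj2_sig C)).
Definition qlift (Z : Type) (G : R -> Z) (C : QT) : Z := G (qrep C).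

Lemma qlift_cls (Z : Type) (G : R -> Z) (HG : forall r r', Rel r r' -> G r = G r') r :
  qlift G (cls r) = G r.
Proof.
rewrite /qlift /qrep; case: (constructive_indefinite_description _ _) => r0 /= E.
have : Eqv r0 r by rewrite -E; exact: rst_refl.
move=> H; elim: H; [move=> a b /HG|move=> a|move=> a b _ E1|move=> a b c _ E1 _ E2] => //; congruence.
Qed.
End Quot.

Lemma In_of_in (T : eqType) (x : T) (s : seq T) : x \in s -> List.In x s.
Proof.
elim: s => //= a s IH; rewrite in_cons => /orP [/eqP ->|/IH]; [left|right] => //.
Qed.

Section Main.
Variables (P X : PolyEnd) (xi : Mor X (Fbar P)).
Notation xm := (proj1_sig xi).

Lemma xi_mor : is_mor xm.
Proof. exact: proj2_sig xi. Qed.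

Definition AX (x : pe1 X) : PTree P := rep (f1 xm x).
Definition TX (x : pe1 X) : Tree := projT1 (AX x).
Definition dX (x : pe1 X) : Mor (tree_pe (TX x)) P := projT2 (AX x).

Lemma leaf_iso_ex e : ptree_iso (forget (mrep (f2 xm e))) (AX (pep e)).
Proof.
have [_ [hp _]] := xi_mor.
apply: iso_sym; rewrite /AX (hp e) /=; exact: rep_iso.
Qed.

Definition leafh e := proj1_sig (constructive_indefinite_description _ (leaf_iso_ex e)).
Lemma leafh_spec e : @ptree_iso_via _ _ _ (leafh e).
Proof. exact: proj2_sig (constructive_indefinite_description _ (leaf_iso_ex e)). Qed.

Definition leafof e : 'I_(tn0 (TX (pep e))) :=
  f0 (proj1_sig (leafh e)) (lf (mrep (f2 xm e))).
Lemma leafof_leaf e : forall b, tt b <> leafof e.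
Proof. exact: leaf_pres (leafh_spec e) (proj2_sig (projT2 (mrep (f2 xm e)))). Qed.

Definition R0 := sum (pe0 X) {x : pe1 X & 'I_(tn0 (TX x))}.
Inductive Rel : R0 -> R0 -> Prop :=
| RelRoot x : Rel (inr (existT _ x (troot (TX x)))) (inl (pet x))
| RelLeaf e : Rel (inr (existT _ (pep e) (leafof e))) (inl (pes e)).

Definition L : PolyEnd :=
  @PE (QT Rel) {x : pe1 X & 'I_(tn2 (TX x))} {x : pe1 X & 'I_(tn1 (TX x))}
    (fun z => cls Rel (inr (existT _ (projT1 z) (ts (projT2 z)))))
    (fun z => existT _ (projT1 z) (tp (projT2 z)))
    (fun z => cls Rel (inr (existT _ (projT1 z) (tt (projT2 z))))).

Lemma finfib_L : finfib L.
Proof.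
case=> x n; exists [seq existT (fun x => 'I_(tn2 (TX x))) x e | e <- enum 'I_(tn2 (TX x))].
case=> x' e2 /= E.
have Ex := f_equal (@projT1 _ _) E; simpl in Ex; subst x'.
apply: List.in_map; apply: In_of_in; exact: mem_enum.
Qed.

Definition GP (r : R0) : pe0 P :=
  match r with inl y => f0 xm y | inr z => f0 (proj1_sig (dX (projT1 z))) (projT2 z) end.

Lemma GP_resp r r' : Rel r r' -> GP r = GP r'.
Proof.
have [hs [hp [ht _]]] := xi_mor.
case=> [x|e] /=; first by rewrite ht.
have [_ [_ [_ [C0 _]]]] := leafh_spec e.
rewrite hs /= /leaf_dec -C0 //.
Qed.

Definition lamPM : PMap L P :=
  @PM L P (qlift GP) (fun z => f2 (proj1_sig (dX (projT1 z))) (projT2 z))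
                     (fun z => f1 (proj1_sig (dX (projT1 z))) (projT2 z)).

Lemma lam_mor : is_mor lamPM.
Proof.
split; [|split; [|split]].
- case=> x e /=; rewrite qlift_cls; last exact: GP_resp.
  by have [ds _] := proj2_sig (dX x); rewrite /= ds.
- case=> x e /=; by have [_ [dp _]] := proj2_sig (dX x); rewrite /= dp.
- case=> x n /=; rewrite qlift_cls; last exact: GP_resp.
  by have [_ [_ [dt _]]] := proj2_sig (dX x); rewrite /= dt.
case=> x n e' /= He'.
have [_ [_ [_ dpb]]] := proj2_sig (dX x).
case: (dpb _ _ He') => e0 [[He0 He0'] U].
exists (existT _ x e0); split; first by split => //; exact: (f_equal (existT _ x) He0).
case=> x' e2 [/= E E'].
have Ex := f_equal (@projT1 _ _) E; simpl in Ex; subst x'.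
have Etp := inj_pair2 _ _ _ _ _ E.
by rewrite (U e2).
Qed.

Definition lam : Mor L P := exist _ _ lam_mor.

Definition mXPM (x : pe1 X) : PMap (tree_pe (TX x)) L :=
  @PM (tree_pe (TX x)) L (fun a => cls Rel (inr (existT _ x a)))
     (fun e => existT (fun x => 'I_(tn2 (TX x))) x e)
     (fun n => existT (fun x => 'I_(tn1 (TX x))) x n).

Lemma mX_mor x : is_mor (mXPM x).
Proof.
split; [by []|split; [by []|split; [by []|]]].
move=> n [x' e2] /= E.
have Ex := f_equal (@projT1 _ _) E; simpl in Ex; subst x'.
have Etp := inj_pair2 _ _ _ _ _ E.
exists e2; split; first by split.
by move=> e [_ /= E2]; have := inj_pair2 _ _ _ _ _ E2.
Qed.

Definition BX (x : pe1 X) : PTree L := existT _ (TX x) (exist _ _ (mX_mor x)).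
Definition MBl x (l : 'I_(tn0 (TX x))) (lp : forall b, tt b <> l) : MPTree L :=
  existT _ (BX x) (exist _ l lp).
Definition MAl x (l : 'I_(tn0 (TX x))) (lp : forall b, tt b <> l) : MPTree P :=
  existT _ (AX x) (exist _ l lp).

Definition eta2 e := mclass_of (MBl (@leafof_leaf e)).
Definition etaPM : PMap X (Fbar L) :=
  @PM X (Fbar L) (fun y => cls Rel (inl y)) eta2 (fun x => class_of (BX x)).

Lemma charA e l lp : f2 xm e = mclass_of (@MAl (pep e) l lp) <-> l = leafof e.
Proof.
split => [H|E].
- have [h [Hh Eh]] := mrep_iso H.
  have [U _] := iso_unique Hh (leafh_spec e).
  by simpl in Eh; rewrite -Eh U.
- subst l; rewrite -(mclass_rep (f2 xm e)); apply: mclass_eq.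
  by exists (leafh e); split; [exact: leafh_spec|].
Qed.

Lemma charB e l lp : eta2 e = mclass_of (@MBl (pep e) l lp) <-> l = leafof e.
Proof.
split => [H|E].
- have [h [Hh Eh]] := mclass_iso H.
  have [U _] := iso_unique Hh (iso_refl_via (BX (pep e))).
  by simpl in Eh; rewrite -Eh U.
- subst l; rewrite /eta2; congr mclass_of; congr existT; congr exist.
  exact: proof_irrelevance.
Qed.

Lemma tAB x e l lp : pep e = x -> f2 xm e = mclass_of (@MAl x l lp) ->
  eta2 e = mclass_of (@MBl x l lp).
Proof. by move=> E; subst x; rewrite charA charB. Qed.

Lemma tBA x e l lp : pep e = x -> eta2 e = mclass_of (@MBl x l lp) ->
  f2 xm e = mclass_of (@MAl x l lp).
Proof. by move=> E; subst x; rewrite charA charB. Qed.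

Lemma pep_mclass (Q : PolyEnd) (M : MPTree Q) :
  class_of (forget (mrep (mclass_of M))) = class_of (forget M).
Proof. exact: class_eq (miso_iso (mrep_iso erefl)). Qed.

Lemma leaf_dec_mclass (Q : PolyEnd) (M : MPTree Q) :
  leaf_dec (mrep (mclass_of M)) = leaf_dec M.
Proof. exact: leaf_dec_iso (mrep_iso erefl). Qed.

Lemma root_dec_class (Q : PolyEnd) (A : PTree Q) :
  root_dec (rep (class_of A)) = root_dec A.
Proof. exact: root_dec_iso (rep_iso erefl). Qed.

Lemma eta_mor : is_mor etaPM.
Proof.
split; [|split; [|split]].
- move=> e /=; rewrite leaf_dec_mclass /leaf_dec /=.
  apply: cls_eq; apply: rst_sym; apply: rst_step; exact: RelLeaf.
- by move=> e /=; rewrite pep_mclass.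
- move=> x /=; rewrite root_dec_class /root_dec /=.
  apply: cls_eq; apply: rst_sym; apply: rst_step.
  exact: (@RelRoot x).
move=> x c /= H.
have [k Hk] := class_iso H.
pose l := f0 (proj1_sig k) (lf (mrep c)).
have lp : forall b, tt b <> l := leaf_pres Hk (proj2_sig (projT2 (mrep c))).
have Hc : c = mclass_of (@MBl x l lp).
  rewrite -(mclass_rep c); apply: mclass_eq; exists k; split => //.
have Hp : @pep (Fbar P) (mclass_of (@MAl x l lp)) = f1 xm x.
  by rewrite /= pep_mclass /= /AX class_rep.
have [_ [_ [_ xpb]]] := xi_mor.
case: (xpb _ _ Hp) => e [[He1 He2] U].
exists e; split; first by split => //; rewrite Hc; exact: tAB.
move=> e2 [He21 He22]; apply: U; split => //.
by apply: tBA => //; rewrite He22.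
Qed.

Definition eta : Mor X (Fbar L) := exist _ _ eta_mor.


Lemma mcomp_iso (Q Q' : PolyEnd) (a : Mor Q Q') (M N : MPTree Q) :
  mptree_iso M N -> mptree_iso (mptree_comp M a) (mptree_comp N a).
Proof. by case=> h [H E]; exists h; split; [exact: comp_via|exact: E]. Qed.

Lemma pcomp_iso (Q Q' : PolyEnd) (a : Mor Q Q') (A B : PTree Q) :
  ptree_iso A B -> ptree_iso (ptree_comp A a) (ptree_comp B a).
Proof. by case=> h H; exists h; exact: comp_via. Qed.

Lemma bij_id (T : Type) : bijective (@id T).
Proof. by exists id. Qed.

Lemma idvia_lam x : @ptree_iso_via P (ptree_comp (BX x) lam) (AX x) (idMor (tree_pe (TX x))).
Proof.
split; first exact: bij_id.
split; first exact: bij_id.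
split; first exact: bij_id.
split; [|split] => // a /=.
by rewrite qlift_cls //; exact: GP_resp.
Qed.

Lemma lam_eq : pmap_eq (pmap_comp (proj1_sig eta) (Fbar_map lam)) xm.
Proof.
split; [|split].
- by move=> y /=; rewrite qlift_cls //; exact: GP_resp.
- move=> e /=; rewrite (proj2 (charA (@leafof_leaf e)) erefl).
  apply: mclass_eq; apply: miso_trans (mcomp_iso lam (mrep_iso erefl)) _.
  by exists (idMor _); split; [exact: idvia_lam|].
- move=> x /=; rewrite -[RHS]class_rep; apply: class_eq.
  apply: iso_trans (pcomp_iso lam (rep_iso erefl)) _.
  by exists (idMor _); exact: idvia_lam.
Qed.

Section Univ.
Variables (Y : PolyEnd) (ups : Mor Y P) (f : Mor X (Fbar Y)).
Hypothesis hf : pmap_eq (pmap_comp (proj1_sig f) (Fbar_map ups)) xm.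
Notation fm := (proj1_sig f).

Definition CX (x : pe1 X) : PTree Y := rep (f1 fm x).
Definition UX (x : pe1 X) : Tree := projT1 (CX x).
Definition uX (x : pe1 X) : Mor (tree_pe (UX x)) Y := projT2 (CX x).

Lemma J_ex x : ptree_iso (AX x) (ptree_comp (CX x) ups).
Proof.
have [_ [_ h1]] := hf; rewrite /AX -(h1 x) /=; exact: rep_iso.
Qed.

Definition J x := proj1_sig (constructive_indefinite_description _ (J_ex x)).
Lemma J_spec x : @ptree_iso_via _ _ _ (J x).
Proof. exact: proj2_sig (constructive_indefinite_description _ (J_ex x)). Qed.

Definition GY (r : R0) : pe0 Y :=
  match r with
  | inl y => f0 fm y
  | inr z => f0 (proj1_sig (uX (projT1 z))) (f0 (proj1_sig (J (projT1 z))) (projT2 z))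
  end.

Lemma key_leaf e : exists q,
  @ptree_iso_via Y (forget (mrep (f2 fm e))) (CX (pep e)) q /\
  f0 (proj1_sig q) (lf (mrep (f2 fm e))) = f0 (proj1_sig (J (pep e))) (leafof e).
Proof.
have [_ [fp _]] := proj2_sig f.
have : ptree_iso (forget (mrep (f2 fm e))) (CX (pep e)).
  apply: iso_sym; rewrite /CX (fp e) /=; exact: rep_iso.
case=> q Hq; exists q; split => //.
have [_ [h2 _]] := hf.
have : mptree_iso (mptree_comp (mrep (f2 fm e)) ups) (mrep (f2 xm e)).
  by apply: mclass_iso; rewrite mclass_rep -(h2 e).
case=> r [Hr Er].
have Hc := iso_trans_via (iso_trans_via Hr (leafh_spec e)) (J_spec (pep e)).
have [U _] := iso_unique (comp_via ups Hq) Hc.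
by rewrite U /= Er.
Qed.

Lemma GY_resp r r' : Rel r r' -> GY r = GY r'.
Proof.
have [fs [fp [ft _]]] := proj2_sig f.
case=> [x|e] /=.
  rewrite (root_pres (J_spec x)) ft /=.
  done.
have [q [Hq Eq]] := key_leaf e.
rewrite fs /= /leaf_dec -Eq.
by have [_ [_ [_ [C0 _]]]] := Hq; rewrite -C0.
Qed.

Definition gPM : PMap L Y :=
  @PM L Y (qlift GY)
    (fun z => f2 (proj1_sig (uX (projT1 z))) (f2 (proj1_sig (J (projT1 z))) (projT2 z)))
    (fun z => f1 (proj1_sig (uX (projT1 z))) (f1 (proj1_sig (J (projT1 z))) (projT2 z))).

Lemma g_mor : is_mor gPM.
Proof.
split; [|split; [|split]].
- case=> x e /=; rewrite qlift_cls; last exact: GY_resp.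
  have [js _] := proj2_sig (J x); have [us _] := proj2_sig (uX x).
  by rewrite /= js us.
- case=> x e /=.
  have [_ [jp _]] := proj2_sig (J x); have [_ [up _]] := proj2_sig (uX x).
  by rewrite /= jp up.
- case=> x n /=; rewrite qlift_cls; last exact: GY_resp.
  have [_ [_ [jt _]]] := proj2_sig (J x); have [_ [_ [ut _]]] := proj2_sig (uX x).
  by rewrite /= jt ut.
case=> x n e' /= He'.
have [_ [jp [_ jpb]]] := proj2_sig (J x); have [_ [up [_ upb]]] := proj2_sig (uX x).
case: (upb _ _ He') => e0 [[He0 He0'] U0].
case: (jpb _ _ He0) => e1 [[He1 He1'] U1].
exists (existT _ x e1); split.
  split; first exact: (f_equal (existT _ x) He1).
  by rewrite /= He1'.
case=> x' e2 [/= E E'].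
have Ex := f_equal (@projT1 _ _) E; simpl in Ex; subst x'.
have Etp := inj_pair2 _ _ _ _ _ E.
have E0 : f2 (proj1_sig (J x)) e2 = e0.
  by symmetry; apply: U0; split => //; rewrite -jp /= Etp.
by rewrite (U1 e2).
Qed.

Definition g : Mor L Y := exist _ _ g_mor.

Lemma g_lam : pmap_eq (pmap_comp (proj1_sig g) (proj1_sig ups)) (proj1_sig lam).
Proof.
have [h0 _] := hf.
split; [|split].
- move=> C; have [r ->] := cls_surj C; rewrite /= !qlift_cls //;
    [|exact: GP_resp|exact: GY_resp].
  case: r => [y|[x a]] /=; first exact: h0.
  by have [_ [_ [_ [C0 _]]]] := J_spec x; have := C0 a.
- case=> x e /=.
  by have [_ [_ [_ [_ [C2 _]]]]] := J_spec x; have := C2 e.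
- case=> x n /=.
  by have [_ [_ [_ [_ [_ C1]]]]] := J_spec x; have := C1 n.
Qed.

Lemma gvia x : @ptree_iso_via Y (ptree_comp (BX x) g) (CX x) (J x).
Proof.
have [B0 [B2 [B1 _]]] := J_spec x.
split => //; split => //; split => //.
split; [|split] => // a /=.
by rewrite qlift_cls //; exact: GY_resp.
Qed.

Lemma g_eta : pmap_eq (pmap_comp (proj1_sig eta) (Fbar_map g)) fm.
Proof.
split; [|split].
- by move=> y /=; rewrite qlift_cls //; exact: GY_resp.
- move=> e /=.
  have [q [Hq Eq]] := key_leaf e.
  pose lpC := leaf_pres Hq (proj2_sig (projT2 (mrep (f2 fm e)))).
  pose MC : MPTree Y := existT _ (CX (pep e)) (exist _ _ lpC).
  rewrite -[RHS]mclass_rep; apply: mclass_eq.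
  apply: miso_trans (mcomp_iso g (mrep_iso erefl)) _.
  apply: (@miso_trans _ _ MC).
    by exists (J (pep e)); split; [exact: gvia|rewrite /= -Eq].
  by apply: miso_sym; exists q; split.
- move=> x /=; rewrite -[RHS]class_rep; apply: class_eq.
  apply: iso_trans (pcomp_iso g (rep_iso erefl)) _.
  by exists (J x); exact: gvia.
Qed.

Lemma via_src_ext (Q : PolyEnd) (T : Tree) (d d' : Mor (tree_pe T) Q) (B : PTree Q) h :
  pmap_eq (proj1_sig d) (proj1_sig d') ->
  @ptree_iso_via Q (existT _ T d) B h -> @ptree_iso_via Q (existT _ T d') B h.
Proof.
move=> [E0 [E2 E1]] [B0 [B2 [B1 [C0 [C2 C1]]]]].
split => //; split => //; split => //.
by split; [|split] => a /=; [rewrite -E0 -C0|rewrite -E2 -C2|rewrite -E1 -C1].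
Qed.

Lemma g_uniq (g' : Mor L Y) :
  pmap_eq (pmap_comp (proj1_sig g') (proj1_sig ups)) (proj1_sig lam) ->
  pmap_eq (pmap_comp (proj1_sig eta) (Fbar_map g')) fm ->
  pmap_eq (proj1_sig g') (proj1_sig g).
Proof.
move=> [H10 [H12 H11]] [H20 [H22 H21]].
have key : forall x, exists w : Mor (tree_pe (TX x)) (tree_pe (UX x)),
    @ptree_iso_via Y (ptree_comp (BX x) g') (CX x) w /\ pmap_eq (proj1_sig w) (proj1_sig (J x)).
  move=> x.
  have : ptree_iso (ptree_comp (BX x) g') (CX x).
    apply: class_iso; rewrite /CX class_rep -(H21 x) /=.
    apply: class_eq; apply: iso_sym; apply: pcomp_iso; exact: rep_iso.
  case=> w Hw; exists w; split => //.
  have Hw' := comp_via ups Hw.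
  have Hw2 : @ptree_iso_via P (AX x) (ptree_comp (CX x) ups) w.
    apply: (via_src_ext _ Hw').
    split; [|split] => a /=.
    + by move: (H10 (cls Rel (inr (existT _ x a)))) => /= ->; rewrite qlift_cls //; exact: GP_resp.
    + by move: (H12 (existT _ x a)) => /= ->.
    + by move: (H11 (existT _ x a)) => /= ->.
  exact: iso_unique Hw2 (J_spec x).
split; [|split].
- move=> C; have [r ->] := cls_surj C; rewrite /= qlift_cls //; last exact: GY_resp.
  case: r => [y|[x a]] /=; first exact: H20.
  have [w [[_ [_ [_ [C0 _]]]] [W0 _]]] := key x.
  by have := C0 a => /= <-; rewrite W0.
- case=> x e /=.
  have [w [[_ [_ [_ [_ [C2 _]]]]] [_ [W2 _]]]] := key x.
  by have := C2 e => /= <-; rewrite W2.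
- case=> x n /=.
  have [w [[_ [_ [_ [_ [_ C1]]]]] [_ [_ W1]]]] := key x.
  by have := C1 n => /= <-; rewrite W1.
Qed.

End Univ.

End Main.

Theorem mainTheorem16 (P : PolyEnd) (hP : finfib P) :
  forall (X : PolyEnd) (xi : Mor X (Fbar P)), finfib X ->
  exists (L : PolyEnd) (lam : Mor L P) (eta : Mor X (Fbar L)),
    finfib L /\
    pmap_eq (pmap_comp (proj1_sig eta) (Fbar_map lam)) (proj1_sig xi) /\
    forall (Y : PolyEnd) (ups : Mor Y P) (f : Mor X (Fbar Y)), finfib Y ->
      pmap_eq (pmap_comp (proj1_sig f) (Fbar_map ups)) (proj1_sig xi) ->
      exists g : Mor L Y,
        (pmap_eq (pmap_comp (proj1_sig g) (proj1_sig ups)) (proj1_sig lam) /\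
         pmap_eq (pmap_comp (proj1_sig eta) (Fbar_map g)) (proj1_sig f)) /\
        forall g' : Mor L Y,
          pmap_eq (pmap_comp (proj1_sig g') (proj1_sig ups)) (proj1_sig lam) ->
          pmap_eq (pmap_comp (proj1_sig eta) (Fbar_map g')) (proj1_sig f) ->
          pmap_eq (proj1_sig g') (proj1_sig g).
Proof.
move=> X xi _.
exists (L xi), (lam xi), (eta xi); split; first exact: finfib_L.
split; first exact: lam_eq.
move=> Y ups f _ hf.
exists (g hf); split; first by split; [exact: g_lam|exact: g_eta].
move=> g' H1 H2; exact: g_uniq H1 H2.
Qed.
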